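(* Let $(\Omega,+)$ be a group, $b$ a subgroup and $y\subseteq\Omega$ with $y\top b$. Then the set ${}^\top b=\{x\subseteq\Omega:x\top b\}$ is stable under the ternary law $(x,u,z)\mapsto\Sigma(b,x,u,z)$ and with the induced law is a torsor, denoted $U_b$; and there are natural torsor isomorphisms between: (1) $U_b$; (2) the set of (images of) sections $\sigma:\Omega/b\to\Omega$ of the canonical projection $\Omega\to\Omega/b$ onto left cosets, with pointwise torsor law $(\sigma\sigma'\sigma'')(u)=\sigma(u)-\sigma'(u)+\sigma''(u)$; (3) the set $\mathrm{Map}(y,b)$ of maps $y\to b$ with pointwise torsor law $(F,F',F'')\mapsto F-F'+F''$. (The isomorphism (2)$\to$(1) sends $\sigma$ to its image; (3)$\to$(1) sends $F$ to $\{\eta+F(\eta):\eta\in y\}$.) Similarly, the set $b^\top=\{x:b\top x\}$, denoted $\check U_b$, is a torsor which can be identified with the set of sections of the projection $\Omega\to b\backslash\Omega$ onto right cosets, with its pointwise torsor structure.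
   Context: $(\Omega,+)$ is a group written additively but not necessarily abelian. For subsets $x,y$, $x\top y$ means every $\omega\in\Omega$ has a unique decomposition $\omega=\xi+\eta$ with $\xi\in x,\eta\in y$. $\Sigma(b,x,u,z)=\{\omega:\exists\beta,\beta'\in b:\ \omega+\beta\in x,\ \omega+\beta'+\beta\in u,\ \omega+\beta'\in z\}$. A torsor is a set $G$ with a map $(x,y,z)\mapsto(xyz)$ satisfying $(xy(zuv))=(x(uzy)v)=((xyz)uv)$ and $(xxy)=y=(yxx)$. *)

(* Defs.v *)
Set Implicit Arguments.
Unset Strict Implicit.

Record group := Group {
  carrier :> Type;
  gadd : carrier -> carrier -> carrier;
  gzero : carrier;
  gopp : carrier -> carrier;
  gaddA : forall x y z, gadd x (gadd y z) = gadd (gadd x y) z;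
  gadd0l : forall x, gadd gzero x = x;
  gadd0r : forall x, gadd x gzero = x;
  gaddNl : forall x, gadd (gopp x) x = gzero;
  gaddNr : forall x, gadd x (gopp x) = gzero
}.

Arguments gadd {g} _ _.
Arguments gzero {g}.
Arguments gopp {g} _.

Section Defs.
Variable O : group.

Definition is_subgroup (b : O -> Prop) : Prop :=
  b gzero /\ (forall x y, b x -> b y -> b (gadd x y)) /\ (forall x, b x -> b (gopp x)).

Definition top (x y : O -> Prop) : Prop :=
  forall w : O, exists! p : O * O, x (fst p) /\ y (snd p) /\ w = gadd (fst p) (snd p).

Definition Sigma (b x u z : O -> Prop) : O -> Prop :=
  fun w => exists beta beta', b beta /\ b beta' /\
    x (gadd w beta) /\ u (gadd (gadd w beta') beta) /\ z (gadd w beta').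

(* Mirror law for b^T (right cosets): omega = xi - upsilon + zeta where
   xi = beta' + omega in x, upsilon = beta + beta' + omega in u, zeta = beta + omega in z. *)
Definition Sigma_check (b x u z : O -> Prop) : O -> Prop :=
  fun w => exists beta beta', b beta /\ b beta' /\
    x (gadd beta' w) /\ u (gadd (gadd beta beta') w) /\ z (gadd beta w).

Definition Utop (b : O -> Prop) : (O -> Prop) -> Prop := fun x => top x b.
Definition Ucheck (b : O -> Prop) : (O -> Prop) -> Prop := fun x => top b x.

Definition lcoset (b : O -> Prop) (w : O) : O -> Prop :=
  fun xi => exists beta, b beta /\ xi = gadd w beta.
Definition rcoset (b : O -> Prop) (w : O) : O -> Prop :=
  fun xi => exists beta, b beta /\ xi = gadd beta w.

Definition LCosets (b : O -> Prop) := {C : O -> Prop | exists w, C = lcoset b w}.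
Definition RCosets (b : O -> Prop) := {C : O -> Prop | exists w, C = rcoset b w}.

Definition lsection (b : O -> Prop) (s : LCosets b -> O) : Prop :=
  forall C, lcoset b (s C) = proj1_sig C.
Definition rsection (b : O -> Prop) (s : RCosets b -> O) : Prop :=
  forall C, rcoset b (s C) = proj1_sig C.

Definition pw_law (A : Type) (s s' s'' : A -> O) : A -> O :=
  fun a => gadd (gadd (s a) (gopp (s' a))) (s'' a).

Definition image (A : Type) (s : A -> O) : O -> Prop :=
  fun w => exists a, s a = w.

Definition maps_into (y b : O -> Prop) (F : {eta : O | y eta} -> O) : Prop :=
  forall eta, b (F eta).

Definition graph_set (y : O -> Prop) (F : {eta : O | y eta} -> O) : O -> Prop :=
  fun w => exists eta : {eta : O | y eta}, w = gadd (proj1_sig eta) (F eta).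

End Defs.

Definition is_torsor (T : Type) (G : T -> Prop) (m : T -> T -> T -> T) : Prop :=
  (forall x y z, G x -> G y -> G z -> G (m x y z)) /\
  (forall x y z u v, G x -> G y -> G z -> G u -> G v ->
     m x y (m z u v) = m x (m u z y) v /\ m x (m u z y) v = m (m x y z) u v) /\
  (forall x y, G x -> G y -> m x x y = y /\ m y x x = y).

Definition torsor_iso (T1 T2 : Type) (G1 : T1 -> Prop) (m1 : T1 -> T1 -> T1 -> T1)
  (G2 : T2 -> Prop) (m2 : T2 -> T2 -> T2 -> T2) (f : T1 -> T2) : Prop :=
  (forall x, G1 x -> G2 (f x)) /\
  (forall x x', G1 x -> G1 x' -> f x = f x' -> x = x') /\
  (forall z, G2 z -> exists x, G1 x /\ f x = z) /\
  (forall x y z, G1 x -> G1 y -> G1 z -> f (m1 x y z) = m2 (f x) (f y) (f z)).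

(* Main.v *)
Require Import Defs.
From Stdlib Require Import FunctionalExtensionality PropExtensionality ProofIrrelevance IndefiniteDescription.
Set Implicit Arguments.

Section Alg.
Variable O : group.
Local Notation "x + y" := (@gadd O x y).
Local Notation "- x" := (@gopp O x).

Lemma assoc_r (x y z : O) : (x + y) + z = x + (y + z).
Proof. symmetry; apply gaddA. Qed.
Lemma cancel_l (x y : O) : x + (- x + y) = y.
Proof. rewrite gaddA, gaddNr, gadd0l; reflexivity. Qed.
Lemma cancel_l' (x y : O) : - x + (x + y) = y.
Proof. rewrite gaddA, gaddNl, gadd0l; reflexivity. Qed.
Lemma add_cancel (x y z : O) : x + y = x + z -> y = z.
Proof. intro H. rewrite <- (cancel_l' x y), H, cancel_l'. reflexivity. Qed.
Lemma opp_unique (x y : O) : x + y = gzero -> y = - x.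
Proof. intro H. apply (add_cancel x). rewrite H, gaddNr. reflexivity. Qed.
Lemma opp_add (x y : O) : - (x + y) = - y + - x.
Proof. symmetry; apply opp_unique. rewrite assoc_r, cancel_l, gaddNr. reflexivity. Qed.
Lemma opp_opp (x : O) : - (- x) = x.
Proof. symmetry; apply opp_unique. apply gaddNl. Qed.
Lemma opp0 : - (@gzero O) = gzero.
Proof. symmetry; apply opp_unique. apply gadd0l. Qed.
Lemma eq_solve (x y z : O) : x + y = z -> y = - x + z.
Proof. intro H. rewrite <- H, cancel_l'. reflexivity. Qed.

Lemma top_unique (x y : O -> Prop) : top x y -> forall a1 b1 a2 b2,
  x a1 -> y b1 -> x a2 -> y b2 -> a1 + b1 = a2 + b2 -> a1 = a2 /\ b1 = b2.
Proof.
  intros H a1 b1 a2 b2 H1 H2 H3 H4 E.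
  destruct (H (a1 + b1)) as [p [Hp Hu]].
  assert (e1 := Hu (a1, b1) (conj H1 (conj H2 eq_refl))).
  assert (e2 := Hu (a2, b2) (conj H3 (conj H4 E))).
  rewrite e1 in e2. injection e2; auto.
Qed.

Lemma top_exists (x y : O -> Prop) : top x y -> forall w, exists a c, x a /\ y c /\ w = a + c.
Proof.
  intros H w. destruct (H w) as [[a c] [(H1&H2&H3) _]]. exists a, c; auto.
Qed.

Lemma top_intro (x y : O -> Prop) :
  (forall w, exists a c, x a /\ y c /\ w = a + c) ->
  (forall a1 b1 a2 b2, x a1 -> y b1 -> x a2 -> y b2 -> a1 + b1 = a2 + b2 -> a1 = a2 /\ b1 = b2) ->
  top x y.
Proof.
  intros E U w. destruct (E w) as (a&c&H1&H2&H3). exists (a, c). split.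
  - simpl; auto.
  - intros [a' c'] (H1'&H2'&H3'). simpl in *.
    destruct (U a c a' c' H1 H2 H1' H2') as [P Q].
    + rewrite <- H3; exact H3'.
    + subst; reflexivity.
Qed.
End Alg.

Ltac gsimpl := repeat progress rewrite ?assoc_r, ?opp_add, ?opp_opp, ?opp0, ?cancel_l, ?cancel_l', ?gaddNr, ?gaddNl, ?gadd0l, ?gadd0r.

Lemma torsor_rev T (G : T -> Prop) m : is_torsor G m -> is_torsor G (fun x y z => m z y x).
Proof.
  intros (Hc & Ha & Hi). split; [|split].
  - intros; apply Hc; auto.
  - intros x y z u v Gx Gy Gz Gu Gv. cbv beta.
    destruct (Ha v u z y x Gv Gu Gz Gy Gx) as [A1 A2]. split; congruence.
  - intros x y Gx Gy. destruct (Hi x y Gx Gy) as [I1 I2]. split; auto.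
Qed.

Lemma iso_rev T1 T2 G1 m1 G2 m2 (f : T1 -> T2) : torsor_iso G1 m1 G2 m2 f ->
  torsor_iso G1 (fun x y z => m1 z y x) G2 (fun x y z => m2 z y x) f.
Proof.
  intros (A & B & C & D). split; [|split; [|split]]; auto.
Qed.

Lemma torsor_transfer T1 T2 G1 m1 G2 m2 (f : T1 -> T2) :
  torsor_iso G1 m1 G2 m2 f -> is_torsor G1 m1 -> is_torsor G2 m2.
Proof.
  intros (HG & Hinj & Hsur & Hhom) (Hc & Ha & Hi). split; [|split].
  - intros x y z Gx Gy Gz.
    destruct (Hsur x Gx) as [a [Ga <-]]. destruct (Hsur y Gy) as [c [Gc <-]].
    destruct (Hsur z Gz) as [d [Gd <-]]. rewrite <- Hhom; auto.
  - intros x y z u v Gx Gy Gz Gu Gv.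
    destruct (Hsur x Gx) as [a [Ga <-]]. destruct (Hsur y Gy) as [c [Gc <-]].
    destruct (Hsur z Gz) as [d [Gd <-]]. destruct (Hsur u Gu) as [e [Ge <-]].
    destruct (Hsur v Gv) as [g [Gg <-]].
    rewrite <- (Hhom d e g), <- (Hhom e d c), <- (Hhom a c d) by auto.
    rewrite <- (Hhom a c), <- (Hhom a), <- Hhom by (try apply Hc; auto).
    destruct (Ha a c d e g) as [A1 A2]; auto. split; f_equal; assumption.
  - intros x y Gx Gy.
    destruct (Hsur x Gx) as [a [Ga <-]]. destruct (Hsur y Gy) as [c [Gc <-]].
    rewrite <- !Hhom by auto. destruct (Hi a c) as [I1 I2]; auto. split; f_equal; assumption.
Qed.

Lemma pw_ax (O : group) A (x y z u v : A -> O) :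
  (pw_law x y (pw_law z u v) = pw_law x (pw_law u z y) v /\
   pw_law x (pw_law u z y) v = pw_law (pw_law x y z) u v) /\
  (pw_law x x y = y /\ pw_law y x x = y).
Proof.
  unfold pw_law; split; split; apply functional_extensionality; intro a; gsimpl; reflexivity.
Qed.

Lemma torsor_pw (O : group) A (G : (A -> O) -> Prop) :
  (forall x y z, G x -> G y -> G z -> G (pw_law x y z)) -> is_torsor G (@pw_law O A).
Proof.
  intro H. split; [exact H|split].
  - intros; apply (proj1 (@pw_ax _ _ x y z u v)).
  - intros; match goal with |- pw_law ?a ?a ?c = _ /\ _ => apply (proj2 (@pw_ax _ _ a c a a a)) end.
Qed.

Section Left.
Variable O : group.
Variable b : O -> Prop.
Hypothesis Hb : is_subgroup b.
Local Notation "x + y" := (@gadd O x y).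
Local Notation "- x" := (@gopp O x).

Lemma b0 : b gzero. Proof. apply Hb. Qed.
Lemma bD x y : b x -> b y -> b (x + y). Proof. apply Hb. Qed.
Lemma bN x : b x -> b (- x). Proof. apply Hb. Qed.
Hint Resolve b0 bD bN : core.

Lemma lcoset_shift w beta : b beta -> lcoset b (w + beta) = lcoset b w.
Proof.
  intro H. apply functional_extensionality; intro xi; apply propositional_extensionality;
  split; intros [g [Hg ->]].
  - exists (beta + g); split; auto. apply assoc_r.
  - exists (- beta + g); split; auto. gsimpl; reflexivity.
Qed.

Lemma lcoset_self w : lcoset b w w.
Proof. exists gzero; split; auto. symmetry; apply gadd0r. Qed.

Lemma lcoset_mem_eq w xi : lcoset b w xi -> lcoset b xi = lcoset b w.
Proof. intros [g [Hg ->]]. apply lcoset_shift; auto. Qed.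

Lemma sec_mem s : @lsection O b s -> forall C, proj1_sig C (s C).
Proof. intros H C. rewrite <- (H C). apply lcoset_self. Qed.

Lemma LC_eq (C C' : LCosets b) : proj1_sig C = proj1_sig C' -> C = C'.
Proof. destruct C, C'; simpl; intro; subst; f_equal; apply proof_irrelevance. Qed.

Definition mkC (w : O) : LCosets b :=
  exist (fun C => exists w, C = lcoset b w) (lcoset b w) (ex_intro _ w eq_refl).

Lemma sec_diff s s' : @lsection O b s -> @lsection O b s' -> forall C, b (- s C + s' C).
Proof.
  intros H H' C. pose proof (sec_mem H C) as M. pose proof (sec_mem H' C) as M'.
  destruct C as [C [w ->]]. simpl in M, M'.
  destruct M as [b1 [Hb1 E1]]. destruct M' as [b2 [Hb2 E2]].
  rewrite E1, E2. gsimpl. auto.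
Qed.

Lemma lsec_pw s s' s'' : @lsection O b s -> @lsection O b s' -> @lsection O b s'' ->
  @lsection O b (pw_law s s' s'').
Proof.
  intros H H' H'' C. unfold pw_law.
  rewrite <- (H C).
  transitivity (lcoset b (s C + ((- s' C + s C) + (- s C + s'' C)))).
  - f_equal. gsimpl. reflexivity.
  - apply lcoset_shift. apply bD; apply sec_diff; auto.
Qed.

Lemma left_torsor_sec : is_torsor (@lsection O b) (@pw_law O (LCosets b)).
Proof. apply torsor_pw. exact lsec_pw. Qed.

Lemma left_iso : torsor_iso (@lsection O b) (@pw_law O (LCosets b)) (Utop b) (Sigma b) (@image O (LCosets b)).
Proof.
  split; [|split; [|split]].
  - intros s Hs. unfold Utop. apply top_intro.
    + intro w. pose proof (sec_mem Hs (mkC w)) as M. simpl in M.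
      destruct M as [beta [Hbeta E]].
      exists (s (mkC w)), (- beta). split; [exists (mkC w); reflexivity|split; auto].
      rewrite E; gsimpl; reflexivity.
    + intros xi1 e1 xi2 e2 [C1 E1] H1 [C2 E2] H2 E. subst xi1 xi2.
      assert (E' : s C1 = s C2 + (e2 + - e1)) by (rewrite <- assoc_r, <- E; gsimpl; reflexivity).
      assert (C1 = C2).
      { apply LC_eq. rewrite <- (Hs C1), <- (Hs C2), E'. apply lcoset_shift; auto. }
      subst. split; [reflexivity| apply add_cancel with (s C2); auto].
  - intros s s' Hs Hs' E. apply functional_extensionality; intro C.
    assert (Hm : image s' (s C)) by (rewrite <- E; exists C; reflexivity).
    destruct Hm as [C' E'].
    assert (C' = C) by (apply LC_eq; rewrite <- (Hs C), <- (Hs' C'), E'; reflexivity).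
    subst; symmetry; exact E'.
  - intros x Hx. unfold Utop in Hx.
    assert (Ex : forall C : LCosets b, exists xi, x xi /\ proj1_sig C xi).
    { intros [C [w ->]]; simpl. destruct (top_exists Hx w) as (xi&beta&H1&H2&H3).
      exists xi; split; auto. exists (- beta); split; auto. rewrite H3; gsimpl; reflexivity. }
    destruct (functional_choice _ Ex) as [s Hsp].
    assert (Uq : forall w xi xi', x xi -> x xi' -> lcoset b w xi -> lcoset b w xi' -> xi = xi').
    { intros w xi xi' H1 H2 [b1 [Hb1 ->]] [b2 [Hb2 ->]].
      refine (proj1 (@top_unique _ _ _ Hx _ _ _ _ H1 b0 H2 (bD (bN Hb2) Hb1) _)). gsimpl; reflexivity. }
    exists s. split.
    + intro C. destruct (Hsp C) as [H1 H2]. destruct C as [C [w ->]]. simpl in *.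
      apply lcoset_mem_eq; auto.
    + apply functional_extensionality; intro xi; apply propositional_extensionality; split.
      * intros [C <-]. apply (Hsp C).
      * intro H. exists (mkC xi). destruct (Hsp (mkC xi)) as [H1 H2].
        apply (Uq xi); auto. apply lcoset_self.
  - intros s s' s'' Hs Hs' Hs''. apply functional_extensionality; intro w;
    apply propositional_extensionality; split.
    + intros [C <-]. unfold pw_law.
      exists (- s'' C + s' C), (- s'' C + s' C + (- s C + s'' C)).
      split; [apply sec_diff; auto|split; [apply bD; apply sec_diff; auto|]].
      split; [|split]; exists C; gsimpl; reflexivity.
    + intros (beta & beta' & Hbeta & Hbeta' & [C1 E1] & [C2 E2] & [C3 E3]).
      assert (C1 = C3).
      { apply LC_eq. rewrite <- (Hs C1), <- (Hs'' C3), E1, E3, !lcoset_shift; auto. }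
      assert (C2 = C3).
      { apply LC_eq. rewrite <- (Hs' C2), <- (Hs'' C3), E2, E3, !lcoset_shift; auto. }
      subst. exists C3. unfold pw_law. rewrite E1, E2, E3. gsimpl; reflexivity.
Qed.

Lemma left_torsor_U : is_torsor (Utop b) (Sigma b).
Proof. exact (torsor_transfer left_iso left_torsor_sec). Qed.

End Left.

Section Maps.
Variable O : group.
Variables b y : O -> Prop.
Hypothesis Hb : is_subgroup b.
Hypothesis Hy : top y b.
Local Notation "x + y" := (@gadd O x y).
Local Notation "- x" := (@gopp O x).
Let bD' x z : b x -> b z -> b (x + z) := @bD O b Hb x z.
Let bN' x : b x -> b (- x) := @bN O b Hb x.
Hint Resolve bD' bN' : core.

Definition Y := {eta : O | y eta}.

Lemma Y_eq (e e' : Y) : proj1_sig e = proj1_sig e' -> e = e'.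
Proof. destruct e, e'; simpl; intro; subst; f_equal; apply proof_irrelevance. Qed.

Lemma maps_torsor : is_torsor (@maps_into O y b) (@pw_law O {eta : O | y eta}).
Proof.
  apply torsor_pw. intros F F' F'' H H' H'' e. unfold pw_law. auto.
Qed.

Lemma maps_iso : torsor_iso (@maps_into O y b) (@pw_law O {eta : O | y eta}) (Utop b) (Sigma b) (@graph_set O y).
Proof.
  split; [|split; [|split]].
  - intros F HF. unfold Utop. apply top_intro.
    + intro w. destruct (top_exists Hy w) as (e0&b0&H1&H2&H3).
      pose (e := exist (fun eta => y eta) e0 H1 : Y).
      exists (e0 + F e), (- F e + b0). split; [exists e; reflexivity| split; [apply bD'; auto; apply HF|]].
      rewrite H3; gsimpl; reflexivity.
    + intros xi1 g1 xi2 g2 [e1 ->] H1 [e2 ->] H2 E.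
      destruct (@top_unique _ _ _ Hy _ _ _ _ (proj2_sig e1) (bD' (HF e1) H1) (proj2_sig e2) (bD' (HF e2) H2)) as [P Q].
      { rewrite <- !assoc_r; exact E. }
      apply Y_eq in P. subst. split; [reflexivity| apply add_cancel with (F e2); auto].
  - intros F F' HF HF' E. apply functional_extensionality; intro e.
    assert (M : graph_set F' (proj1_sig e + F e)) by (rewrite <- E; exists e; reflexivity).
    destruct M as [e' E'].
    destruct (@top_unique _ _ _ Hy _ _ _ _ (proj2_sig e) (HF e) (proj2_sig e') (HF' e') E') as [P Q].
    apply Y_eq in P; subst; auto.
  - intros x Hx. unfold Utop in Hx.
    assert (Ex : forall e : Y, exists beta, b beta /\ x (proj1_sig e + beta)).
    { intro e. destruct (top_exists Hx (proj1_sig e)) as (xi&g&H1&H2&H3).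
      exists (- g). split; auto. replace (proj1_sig e + - g) with xi; auto.
      rewrite H3; gsimpl; reflexivity. }
    destruct (functional_choice _ Ex) as [F HF].
    exists F. split; [intro e; apply HF|].
    apply functional_extensionality; intro xi; apply propositional_extensionality; split.
    + intros [e ->]. apply HF.
    + intro H. destruct (top_exists Hy xi) as (e0&b0&H1&H2&H3).
      pose (e := exist (fun eta => y eta) e0 H1 : Y).
      destruct (HF e) as [Hb1 Hx1].
      assert (Fe : F e = b0).
      { destruct (@top_unique _ _ _ Hx _ _ _ _ Hx1 (bN' Hb1) H (bN' H2)) as [P _].
        { simpl. rewrite H3; gsimpl; reflexivity. }
        apply add_cancel with e0. transitivity xi; [exact P | exact H3]. }
      exists e. rewrite H3, Fe. reflexivity.
  - intros F F' F'' HF HF' HF''. apply functional_extensionality; intro w;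
    apply propositional_extensionality; split.
    + intros [e ->]. unfold pw_law.
      exists (- F'' e + F' e), (- F'' e + (F' e + (- F e + F'' e))).
      split; [apply bD'; auto; apply HF''|split; [repeat apply bD'; auto|]].
      split; [|split]; exists e; gsimpl; reflexivity.
    + intros (beta & beta' & Hbeta & Hbeta' & [e1 E1] & [e2 E2] & [e3 E3]).
      assert (Hw : w = proj1_sig e1 + (F e1 + - beta)) by (rewrite <- assoc_r, <- E1; gsimpl; reflexivity).
      destruct (@top_unique _ _ _ Hy _ _ _ _ (proj2_sig e3) (HF'' e3) (proj2_sig e1)
                  (bD' (bD' (HF e1) (bN' Hbeta)) Hbeta')) as [P3 _].
      { rewrite <- E3, Hw; gsimpl; reflexivity. }
      destruct (@top_unique _ _ _ Hy _ _ _ _ (proj2_sig e2) (HF' e2) (proj2_sig e1)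
                  (bD' (bD' (bD' (HF e1) (bN' Hbeta)) Hbeta') Hbeta)) as [P2 _].
      { rewrite <- E2, Hw; gsimpl; reflexivity. }
      apply Y_eq in P3. apply Y_eq in P2. subst e3 e2.
      assert (Hbv : beta = - (proj1_sig e1 + F'' e1) + (proj1_sig e1 + F' e1))
        by (rewrite <- E2, <- E3; gsimpl; reflexivity).
      exists e1. rewrite Hw. unfold pw_law. rewrite Hbv. gsimpl; reflexivity.
Qed.

End Maps.

Definition opg (O : group) : group.
Proof.
  refine (@Group (carrier O) (fun x y => gadd y x) gzero gopp _ _ _ _ _).
  - intros; symmetry; apply gaddA.
  - intros; apply gadd0r.
  - intros; apply gadd0l.
  - intros; apply gaddNr.
  - intros; apply gaddNl.
Defined.

Lemma opg_sub (O : group) (b : O -> Prop) : is_subgroup b -> @is_subgroup (opg O) b.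
Proof.
  intros (H0 & H1 & H2). split; [exact H0|split]; intros; simpl; auto.
Qed.

Lemma Ucheck_eq (O : group) (b : O -> Prop) : Ucheck b = @Utop (opg O) b.
Proof.
  apply functional_extensionality; intro x; apply propositional_extensionality.
  unfold Ucheck, Utop; split; intro H; apply top_intro.
  - intro w. destruct (top_exists H w) as (be&xi&H1&H2&H3). exists xi, be. simpl; auto.
  - intros a1 c1 a2 c2 H1 H2 H3 H4 E. simpl in E.
    destruct (@top_unique _ _ _ H _ _ _ _ H2 H1 H4 H3 E); auto.
  - intro w. destruct (top_exists H w) as (xi&be&H1&H2&H3). exists be, xi. simpl in *; auto.
  - intros a1 c1 a2 c2 H1 H2 H3 H4 E.
    destruct (@top_unique _ _ _ H _ _ _ _ H2 H1 H4 H3 E); auto.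
Qed.

Lemma Scheck_eq (O : group) (b : O -> Prop) :
  Sigma_check b = fun x u z => @Sigma (opg O) b z u x.
Proof.
  apply functional_extensionality; intro x; apply functional_extensionality; intro u;
  apply functional_extensionality; intro z; apply functional_extensionality; intro w;
  apply propositional_extensionality.
  unfold Sigma_check, Sigma; simpl; split; intros (be&be'&H1&H2&H3&H4&H5);
    exists be, be'; repeat split; auto.
  - rewrite <- assoc_r; exact H4.
  - rewrite assoc_r; exact H4.
Qed.

Lemma pwR_eq (O : group) (b : O -> Prop) :
  @pw_law O (RCosets b) = fun s s' s'' => @pw_law (opg O) (@LCosets (opg O) b) s'' s' s.
Proof.
  apply functional_extensionality; intro s; apply functional_extensionality; intro s';
  apply functional_extensionality; intro s''; apply functional_extensionality; intro a.
  unfold pw_law; simpl. gsimpl; reflexivity.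
Qed.

Theorem theorem5p1 (O : group) (b y : O -> Prop)
  (Hb : is_subgroup b) (Hy : top y b) :
  (* U_b *)
  is_torsor (Utop b) (Sigma b) /\
  (* (2) sections of Omega -> Omega/b, pointwise, and (2) -> (1) via image *)
  is_torsor (@lsection O b) (@pw_law O (LCosets b)) /\
  torsor_iso (@lsection O b) (@pw_law O (LCosets b)) (Utop b) (Sigma b) (@image O (LCosets b)) /\
  (* (3) Map(y,b), pointwise, and (3) -> (1) via F |-> {eta + F eta} *)
  is_torsor (@maps_into O y b) (@pw_law O {eta : O | y eta}) /\
  torsor_iso (@maps_into O y b) (@pw_law O {eta : O | y eta}) (Utop b) (Sigma b) (@graph_set O y) /\
  (* check U_b and sections of Omega -> b\Omega *)
  is_torsor (Ucheck b) (Sigma_check b) /\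
  is_torsor (@rsection O b) (@pw_law O (RCosets b)) /\
  torsor_iso (@rsection O b) (@pw_law O (RCosets b)) (Ucheck b) (Sigma_check b) (@image O (RCosets b)).
Proof.
  pose proof (opg_sub Hb) as Hb'.
  split; [exact (left_torsor_U Hb)|].
  split; [exact (left_torsor_sec Hb)|].
  split; [exact (left_iso Hb)|].
  split; [exact (maps_torsor y Hb)|].
  split; [exact (maps_iso Hb Hy)|].
  rewrite (@Ucheck_eq O b), (@Scheck_eq O b), (@pwR_eq O b).
  split; [exact (torsor_rev (left_torsor_U Hb'))|].
  split; [exact (torsor_rev (left_torsor_sec Hb'))|].
  exact (iso_rev (left_iso Hb')).
Qed.
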